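(* Let $G$ be a cyclic group of order $3$ and $p \neq 2$ a prime, and let $\mathbb{Z}_{(p)} = \{ m/n : m,n \in \mathbb{Z},\ \gcd(p,n)=1\}$. Then the group ring $\mathbb{Z}_{(p)}G$ is $\Sigma$-strongly clean.
   Context: All rings are associative with identity. For a positive integer $n$, an element $x \in R$ is $n$-strongly clean if $x = e + u_1 + \cdots + u_n$ where $e^2=e$, $u_1,\dots,u_n$ are units of $R$, and $eu_i = u_i e$ for all $i$. An element of $R$ is $\Sigma$-strongly clean if it is $n$-strongly clean for some positive integer $n$; $R$ is $\Sigma$-strongly clean if every element of $R$ is $\Sigma$-strongly clean. *)

(* Defs.v *)
From HB Require Import structures.
From mathcomp Require Import all_boot all_order all_algebra.
Set Implicit Arguments. Unset Strict Implicit. Unset Printing Implicit Defensive.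
Import Order.TTheory GRing.Theory Num.Theory.
Local Open Scope ring_scope.

(* Z_(p) = { m/n : gcd(p,n) = 1 } as a subset of the rationals:
   a rational lies in Z_(p) iff its reduced denominator is coprime to p. *)
Definition in_Zp_loc (p : nat) (q : rat) : bool := coprime p `|denq q|%N.

(* The group ring Z_(p)G, G = <g | g^3 = 1> cyclic of order 3.
   An element a0 + a1 g + a2 g^2 is represented by the triple (a0, a1, a2)
   of rationals, constrained to lie in Z_(p). *)
Definition GR := (rat * rat * rat)%type.

Definition gr_add (x y : GR) : GR :=
  let: (a0, a1, a2) := x in let: (b0, b1, b2) := y in
  (a0 + b0, a1 + b1, a2 + b2).

Definition gr_mul (x y : GR) : GR :=
  let: (a0, a1, a2) := x in let: (b0, b1, b2) := y in
  (a0 * b0 + a1 * b2 + a2 * b1,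
   a0 * b1 + a1 * b0 + a2 * b2,
   a0 * b2 + a1 * b1 + a2 * b0).

Definition gr_zero : GR := (0, 0, 0).
Definition gr_one : GR := (1, 0, 0).

Definition in_ZpG (p : nat) (x : GR) : bool :=
  let: (a0, a1, a2) := x in [&& in_Zp_loc p a0, in_Zp_loc p a1 & in_Zp_loc p a2].

Definition gr_idem (p : nat) (e : GR) : Prop := in_ZpG p e /\ gr_mul e e = e.

Definition gr_unit (p : nat) (u : GR) : Prop :=
  in_ZpG p u /\
  exists v : GR, in_ZpG p v /\ gr_mul u v = gr_one /\ gr_mul v u = gr_one.

Definition n_strongly_clean (p n : nat) (x : GR) : Prop :=
  exists (e : GR) (us : seq GR),
    size us = n /\ gr_idem p e /\
    (forall u, u \in us -> gr_unit p u /\ gr_mul e u = gr_mul u e) /\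
    x = gr_add e (foldr gr_add gr_zero us).

Definition Sigma_strongly_clean_elt (p : nat) (x : GR) : Prop :=
  exists n : nat, (0 < n)%N /\ n_strongly_clean p n x.

Definition ZpC3_Sigma_strongly_clean (p : nat) : Prop :=
  forall x : GR, in_ZpG p x -> Sigma_strongly_clean_elt p x.

(* Main.v *)
Require Import Defs.
From HB Require Import structures.
From mathcomp Require Import all_boot all_order all_algebra.
From mathcomp Require Import ring.
Import Order.TTheory GRing.Theory Num.Theory.
Local Open Scope ring_scope.

Lemma key (p : nat) (hp : prime p) (m n : int) :
  ~~ (p %| `|n|)%N -> in_Zp_loc p (m%:~R / n%:~R).
Proof.
move=> hn; have n0 : n != 0 by apply: contraNneq hn => ->; rewrite dvdn0.
rewrite /in_Zp_loc -[_ / _](fracqE (m, n)) den_fracq /= n0 absz_nat.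
rewrite prime_coprime //; apply: contra hn => h.
apply: dvdn_trans h _; apply: dvdn_div; exact: dvdn_gcdr.
Qed.

Definition zunit (p : nat) (c : rat) := [&& c != 0, in_Zp_loc p c & in_Zp_loc p c^-1].

Lemma dec2 (p : nat) (hp : prime p) (hp2 : p != 2%N) (a : rat) :
  in_Zp_loc p a -> exists u v, [/\ zunit p u, zunit p v & a = u + v].
Proof.
move=> ha; have ea := divq_num_den a.
set m := numq a in ea *; set n := denq a in ea *.
have hn : ~~ (p %| `|n|)%N by rewrite -prime_coprime.
have n0 : n%:~R != 0 :> rat by rewrite intr_eq0 denq_neq0.
have p2 : ~~ (p %| 2)%N.
  apply/negP => /(dvdn_leq (isT : (0 < 2)%N)); rewrite leq_eqVlt (negPf hp2) /=.
  by rewrite ltnS leqNgt prime_gt1.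
have [hm|hm] := boolP (p %| `|m|)%N.
- have hmn : ~~ (p %| `|m - n|)%N.
    apply: contra hn => h; have : (p%:Z %| m - (m - n))%Z.
      exact: rpredB.
    by rewrite opprB addrC subrK.
  have mn0 : (m - n)%:~R != 0 :> rat.
    by rewrite intr_eq0; apply: contraNneq hmn => ->; rewrite dvdn0.
  exists 1, (a - 1); split; last by ring.
    by rewrite /zunit invr1 /in_Zp_loc oner_eq0 /= coprimen1.
  have e1 : a - 1 = (m - n)%:~R / n%:~R by rewrite -ea rmorphB /=; field.
  have e2 : (a - 1)^-1 = n%:~R / (m - n)%:~R by rewrite e1 invf_div.
  rewrite /zunit e2 e1 key // key // andbT.
  by rewrite mulf_neq0 // invr_eq0.
- have m0 : m%:~R != 0 :> rat.
    by rewrite intr_eq0; apply: contraNneq hm => ->; rewrite dvdn0.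
  have h2m : ~~ (p %| `|(2 * m)%R|)%N by rewrite abszM Euclid_dvdM // negb_or p2.
  have h2m0 : (2 * m)%:~R != 0 :> rat.
    by rewrite intr_eq0; apply: contraNneq h2m => ->; rewrite dvdn0.
  have hNm : ~~ (p %| `|(- m)%R|)%N by rewrite abszN.
  have hNm0 : (- m)%:~R != 0 :> rat by rewrite rmorphN oppr_eq0.
  exists (2 * a), (- a); split; last by ring.
    have e1 : 2 * a = (2 * m)%:~R / n%:~R by rewrite -ea rmorphM /=; field.
    rewrite /zunit e1 invf_div key // key //.
    by rewrite mulf_neq0 // invr_eq0.
  have e1 : - a = (- m)%:~R / n%:~R by rewrite -ea rmorphN /=; field.
  rewrite /zunit e1 invf_div key // key //.
  by rewrite mulf_neq0 // invr_eq0.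
Qed.

Lemma in0 p : in_Zp_loc p 0. Proof. by rewrite /in_Zp_loc coprimen1. Qed.

Lemma unit_g (p : nat) (c : rat) : zunit p c ->
  [/\ gr_unit p (c, 0, 0), gr_unit p (0, c, 0) & gr_unit p (0, 0, c)].
Proof.
case/and3P => c0 hc hi; have h0 := in0 p.
split; split; rewrite /in_ZpG ?hc ?h0 //.
- exists (c^-1, 0, 0); rewrite /in_ZpG hi h0 /gr_mul /gr_one; split=> //.
  by split; congr (_, _, _); field.
- exists (0, 0, c^-1); rewrite /in_ZpG hi h0 /gr_mul /gr_one; split=> //.
  by split; congr (_, _, _); field.
- exists (0, c^-1, 0); rewrite /in_ZpG hi h0 /gr_mul /gr_one; split=> //.
  by split; congr (_, _, _); field.
Qed.

Theorem corollary1p15 (p : nat) (hp : prime p) (hp2 : p != 2%N) :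
  ZpC3_Sigma_strongly_clean p.
Proof.
move=> [[a0 a1] a2] /and3P [h0 h1 h2].
have [u0 [v0 [hu0 hv0 e0]]] := @dec2 p hp hp2 _ h0.
have [u1 [v1 [hu1 hv1 e1]]] := @dec2 p hp hp2 _ h1.
have [u2 [v2 [hu2 hv2 e2]]] := @dec2 p hp hp2 _ h2.
have [U0 _ _] := @unit_g p _ hu0; have [V0 _ _] := @unit_g p _ hv0.
have [_ U1 _] := @unit_g p _ hu1; have [_ V1 _] := @unit_g p _ hv1.
have [_ _ U2] := @unit_g p _ hu2; have [_ _ V2] := @unit_g p _ hv2.
exists 6%N; split=> //.
exists gr_zero, [:: (u0, 0, 0); (v0, 0, 0); (0, u1, 0); (0, v1, 0); (0, 0, u2); (0, 0, v2)].
split=> //; split.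
  by split; [rewrite /gr_zero /in_ZpG in0 | rewrite /gr_mul /gr_zero; congr (_, _, _); ring].
split.
  move=> u; rewrite !inE => /or4P [/eqP->|/eqP->|/eqP->|/orP[/eqP->|/orP[/eqP->|/eqP->]]];
  (split; [by [] | rewrite /gr_mul /gr_zero; congr (_, _, _); ring]).
rewrite /gr_add /gr_zero /= e0 e1 e2; congr (_, _, _); ring.
Qed.
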